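(* Let $y_0\in\mathbb{R}$, $b>0$, $\epsilon>0$, and let $f:[y_0,\infty)\to\mathbb{R}$ be such that $p:=1/f$ is well defined and twice differentiable on $[y_0,\infty)$, with $f(y_0)>0$, $f'(y)>0$ and $p''(y)>0$ for all $y\ge y_0$. Assume $b<\int_{y_0}^{\infty}p(y)\,dy$ (the integral may be $+\infty$). For $h>0$ and integers $N\ge 0$ put $\Sigma_{l,h,N}=\sum_{i=1}^{N}h\,p(y_0+hi)$. For each positive integer $j$ let $h^{(j)}=\epsilon/j$ and let $n_2^{(j)}$ be the smallest positive integer $N$ with $\Sigma_{l,h^{(j)},N}\ge b$, and assume that $n_2^{(1)}$ exists. Then for every positive integer $j$, $n_2^{(j)}$ exists and $$h^{(j)}\,n_2^{(j)}\le h^{(1)}\,n_2^{(1)}.$$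
   Context: $\Sigma_{l,h,N}$ is the lower rectangular (right-endpoint) sum for $\int_{y_0}^{y_0+hN}p(y)\,dy$ with step $h$; the empty sum ($N=0$) is $0$. The conditions on $f$ imply $f>0$, $p>0$ and $p$ strictly decreasing on $[y_0,\infty)$. *)

(* Defs.v *)
From Stdlib Require Import Reals.
From Coquelicot Require Import Coquelicot.
Open Scope R_scope.

(* One-sided-at-the-endpoint derivative on the half-line [a, +oo):
   g' y is the derivative of g at y relative to [a, +oo)
   (a right derivative at y = a, an ordinary derivative for y > a).
   Only values of g on [a, +oo) are used. *)
Definition is_derive_on_half (a : R) (g g' : R -> R) : Prop :=
  forall y, a <= y ->
    filterlim (fun t => (g t - g y) / (t - y))
      (within (fun t => a <= t /\ t <> y) (locally y)) (locally (g' y)).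

Fixpoint sigma_l (p : R -> R) (y0 h : R) (N : nat) : R :=
  match N with
  | O => 0
  | S n => sigma_l p y0 h n + h * p (y0 + h * INR (S n))
  end.

Definition is_n2 (p : R -> R) (y0 h b : R) (N : nat) : Prop :=
  (1 <= N)%nat /\ b <= sigma_l p y0 h N /\
  forall M : nat, (1 <= M)%nat -> (M < N)%nat -> sigma_l p y0 h M < b.

(* Main.v *)
Require Import Defs.
From Stdlib Require Import Reals Lra Lia.
From Coquelicot Require Import Coquelicot.
Open Scope R_scope.

Lemma half_lim (a : R) g l y :
  filterlim g (within (fun t => a <= t /\ t <> y) (locally y)) (locally l) ->
  forall e, 0 < e -> exists d, 0 < d /\
    forall t, a <= t -> t <> y -> Rabs (t - y) < d -> Rabs (g t - l) < e.
Proof.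
  intros H e He.
  destruct (proj1 (filterlim_locally (F := within (fun t => a <= t /\ t <> y) (locally y)) g l) H (mkposreal e He)) as [d Hd].
  exists (pos d); split; [apply cond_pos|].
  intros t H1 H2 H3. specialize (Hd t H3 (conj H1 H2)). exact Hd.
Qed.

Lemma interior_deriv y0 f f1 y :
  is_derive_on_half y0 f f1 -> y0 < y -> derivable_pt_lim f y (f1 y).
Proof.
  intros H Hy e He.
  destruct (half_lim _ _ _ _ (H y (Rlt_le _ _ Hy)) e He) as [d [Hd Hd']].
  assert (Hp : 0 < Rmin d (y - y0)) by (apply Rmin_pos; lra).
  exists (mkposreal _ Hp). intros h Hh0 Hh. simpl in Hh.
  assert (A1 : Rabs h < d) by (pose proof (Rmin_l d (y-y0)); lra).
  assert (A2 : Rabs h < y - y0) by (pose proof (Rmin_r d (y-y0)); lra).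
  assert (A3 : y0 <= y + h) by (pose proof (Rle_abs (-h)); rewrite Rabs_Ropp in *; lra).
  assert (A4 : y + h <> y) by lra.
  specialize (Hd' (y+h) A3 A4).
  replace (y + h - y) with h in Hd' by ring.
  apply Hd'; exact A1.
Qed.

Lemma f_mono y0 f f1 :
  is_derive_on_half y0 f f1 -> (forall y, y0 <= y -> 0 < f1 y) ->
  forall a b, y0 <= a -> a <= b -> f a <= f b.
Proof.
  intros H Hpos.
  assert (Int : forall a b, y0 < a -> a < b -> f a < f b).
  { intros a b Ha Hab.
    destruct (MVT_cor2 f f1 a b Hab) as [c [Hc1 Hc2]].
    - intros c Hc. apply (interior_deriv y0); auto; lra.
    - assert (0 < f1 c) by (apply Hpos; lra). nra. }
  intros a b Ha Hab.
  destruct (Req_dec a b) as [E|Nab]; [subst; lra|].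
  destruct (Req_dec a y0) as [E|Na]; [|apply Rlt_le, Int; lra].
  subst a.
  assert (Hf := Hpos y0 (Rle_refl _)).
  destruct (half_lim _ _ _ _ (H y0 (Rle_refl _)) (f1 y0 / 2)) as [d [Hd Hd']]; [lra|].
  set (t := y0 + Rmin d (b - y0) / 2).
  assert (Hm : 0 < Rmin d (b - y0)) by (apply Rmin_pos; lra).
  pose proof (Rmin_l d (b-y0)); pose proof (Rmin_r d (b-y0)).
  assert (T1 : y0 < t) by (unfold t; lra).
  assert (T2 : t < b) by (unfold t; lra).
  assert (T3 : Rabs (t - y0) < d) by (rewrite Rabs_right; unfold t; lra).
  specialize (Hd' t (Rlt_le _ _ T1) ltac:(lra) T3).
  apply Rabs_def2 in Hd'. destruct Hd' as [_ Hd'].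
  assert (Q : 0 < (f t - f y0) / (t - y0)) by lra.
  assert (Q2 : 0 < f t - f y0).
  { assert (0 < t - y0) by lra.
    replace (f t - f y0) with ((f t - f y0) / (t - y0) * (t - y0)) by (field; lra).
    nra. }
  pose proof (Int t b T1 T2). lra.
Qed.

Lemma sigma_S p y0 h n : sigma_l p y0 h (S n) = sigma_l p y0 h n + h * p (y0 + h * INR (S n)).
Proof. reflexivity. Qed.

Lemma sigma_fine p y0 eps j :
  0 < eps -> (1 <= j)%nat ->
  (forall a b, y0 <= a -> a <= b -> p b <= p a) ->
  forall n, sigma_l p y0 eps n <= sigma_l p y0 (eps / INR j) (j * n).
Proof.
  intros He Hj Hp.
  assert (HJ : 0 < INR j) by (apply lt_0_INR; lia).
  set (h := eps / INR j).
  assert (Hh : 0 < h) by (unfold h; apply Rdiv_lt_0_compat; lra).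
  assert (Hhj : h * INR j = eps) by (unfold h; field; lra).
  induction n as [|n IH]; [simpl; rewrite Nat.mul_0_r; simpl; lra|].
  assert (K : forall k, (k <= j)%nat ->
    sigma_l p y0 h (j * n) + INR k * (h * p (y0 + eps * INR (S n)))
      <= sigma_l p y0 h (j * n + k)).
  { induction k as [|k IHk]; intros Hk.
    - rewrite Nat.add_0_r; simpl; lra.
    - specialize (IHk ltac:(lia)).
      replace (j * n + S k)%nat with (S (j * n + k)) by lia.
      rewrite sigma_S.
      assert (p (y0 + eps * INR (S n)) <= p (y0 + h * INR (S (j * n + k)))).
      { apply Hp.
        - assert (0 <= h * INR (S (j * n + k))) by (apply Rmult_le_pos; [lra|apply pos_INR]). lra.
        - apply Rplus_le_compat_l. rewrite <- Hhj, Rmult_assoc.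
          apply Rmult_le_compat_l; [lra|]. rewrite <- mult_INR. apply le_INR. lia. }
      rewrite S_INR. assert (h * p (y0 + eps * INR (S n)) <= h * p (y0 + h * INR (S (j * n + k)))) by (apply Rmult_le_compat_l; lra). lra. }
  specialize (K j (le_n _)).
  rewrite Nat.mul_succ_r, sigma_S. fold h.
  assert (INR j * (h * p (y0 + eps * INR (S n))) = eps * p (y0 + eps * INR (S n))) by (rewrite <- Hhj; ring).
  lra.
Qed.

Lemma find_min (P : nat -> Prop) (dec : forall n, {P n} + {~ P n}) :
  forall K, (forall M, (1 <= M <= K)%nat -> ~ P M) \/
    exists N, (1 <= N <= K)%nat /\ P N /\ forall M, (1 <= M)%nat -> (M < N)%nat -> ~ P M.
Proof.
  induction K as [|K IH].
  - left; intros; lia.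
  - destruct IH as [IH|IH].
    + destruct (dec (S K)) as [Y|Nn].
      * right. exists (S K). split; [lia|]. split; [auto|]. intros M H1 H2; apply IH; lia.
      * left. intros M HM. destruct (Nat.eq_dec M (S K)); [subst; auto|apply IH; lia].
    + right. destruct IH as [N [H1 H2]]. exists N. split; [lia|auto].
Qed.

Theorem lemma1 (y0 b eps : R) (f : R -> R) (n1 : nat) :
  0 < b -> 0 < eps ->
  (* p := 1/f is well defined on [y0, +oo) *)
  (forall y, y0 <= y -> f y <> 0) ->
  (* p twice differentiable on [y0,+oo) with p'' > 0 there *)
  (exists p1 p2 : R -> R,
      is_derive_on_half y0 (fun y => / f y) p1 /\
      is_derive_on_half y0 p1 p2 /\
      (forall y, y0 <= y -> 0 < p2 y)) ->
  (* f(y0) > 0 and f' > 0 on [y0,+oo) *)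
  0 < f y0 ->
  (exists f1 : R -> R,
      is_derive_on_half y0 f f1 /\ (forall y, y0 <= y -> 0 < f1 y)) ->
  (* b < int_{y0}^{+oo} p (improper integral, possibly +oo) *)
  Rbar_lt (Finite b) (Lim (fun T => RInt (fun y => / f y) y0 T) p_infty) ->
  (* n_2^{(1)} exists, for h^{(1)} = eps / 1 *)
  is_n2 (fun y => / f y) y0 (eps / INR 1) b n1 ->
  forall j : nat, (1 <= j)%nat ->
    exists N : nat,
      is_n2 (fun y => / f y) y0 (eps / INR j) b N /\
      (eps / INR j) * INR N <= (eps / INR 1) * INR n1.
Proof.
  intros Hb He _ _ Hf0 [f1 [Hd Hf1]] _ Hn1 j Hj.
  assert (E1 : eps / INR 1 = eps) by (simpl; field).
  rewrite E1 in *.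
  assert (Hp : forall a c, y0 <= a -> a <= c -> / f c <= / f a).
  { intros a c Ha Hac.
    pose proof (f_mono _ _ _ Hd Hf1 y0 a (Rle_refl _) Ha).
    pose proof (f_mono _ _ _ Hd Hf1 a c Ha Hac).
    apply Rinv_le_contravar; lra. }
  destruct Hn1 as [Hn1a [Hn1b _]].
  pose proof (sigma_fine _ y0 eps j He Hj Hp n1) as S.
  destruct (find_min (fun N => b <= sigma_l (fun y => / f y) y0 (eps / INR j) N)
             (fun n => Rle_dec _ _) (j * n1)) as [L|[N [HN1 [HN2 HN3]]]].
  - exfalso. apply (L (j * n1)%nat); [nia|lra].
  - exists N. split.
    + split; [lia|]. split; [auto|]. intros M H1 H2. apply Rnot_le_lt. apply HN3; auto.
    + assert (HJ : 0 < INR j) by (apply lt_0_INR; lia).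
      assert (INR N <= INR j * INR n1) by (rewrite <- mult_INR; apply le_INR; lia).
      replace (eps * INR n1) with ((eps / INR j) * (INR j * INR n1)) by (field; lra).
      apply Rmult_le_compat_l; [|auto].
      apply Rlt_le, Rdiv_lt_0_compat; lra.
Qed.
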